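(* For any positive integers $q$ and $k$ with $k\ge2$ and any $A\subseteq\mathbb{N}$, the Cayley graph $G(\mathbb{Z}^2,\pm AD_{q,k})$ is isomorphic to a subgraph of the graph with vertex set $\mathbb{R}^2$ in which two points are adjacent if their Euclidean distance lies in $A$.
   Context: For a set $C'\subseteq\mathbb{Z}^2\setminus\{0\}$ with $C'=-C'$, $G(\mathbb{Z}^2,C')$ is the Cayley graph with vertex set $\mathbb{Z}^2$ in which $u,v$ are adjacent iff $v-u\in C'$. For positive integers $q,k$ with $k\ge2$, let $X_{q,k}=\prod_{j=1}^{k-1}(q^{k+j}+q^{k-j}+1)$ and let $D_{q,k}\subseteq\mathbb{Z}^2$ consist of the points $\frac{X_{q,k}}{q^{k+j}+q^{k-j}+1}\left(q^{k+j}-q^{k-j},\,-q^j-2q^k\right)$ for $j=1,\ldots,k-1$. $\pm AD_{q,k}$ is the set of all $\pm ad$ with $a\in A$, $d\in D_{q,k}$. *)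

(* Defs.v *)
From Stdlib Require Import Reals ZArith List.
Import ListNotations.
Open Scope Z_scope.

Definition fac (q k j : Z) : Z := q ^ (k + j) + q ^ (k - j) + 1.

Definition Xqk (q k : Z) : Z :=
  fold_right Z.mul 1 (map (fun j => fac q k (Z.of_nat j)) (seq 1 (Z.to_nat (k - 1)))).

(* The j-th point of D_{q,k}:  X/(fac j) * (q^(k+j) - q^(k-j), -q^j - 2 q^k).
   The division is exact since fac j is a factor of X. *)
Definition Dpt (q k j : Z) : Z * Z :=
  let c := Xqk q k / fac q k j in
  (c * (q ^ (k + j) - q ^ (k - j)), c * (- q ^ j - 2 * q ^ k)).

Definition in_pmAD (A : nat -> Prop) (q k : Z) (w : Z * Z) : Prop :=
  exists (a : nat) (j : Z) (s : Z),
    A a /\ 1 <= j <= k - 1 /\ (s = 1 \/ s = -1) /\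
    w = (s * Z.of_nat a * fst (Dpt q k j), s * Z.of_nat a * snd (Dpt q k j)).

Definition cayley_adj (C : Z * Z -> Prop) (u v : Z * Z) : Prop :=
  C (fst v - fst u, snd v - snd u).

Close Scope Z_scope.
Open Scope R_scope.

Definition euclid_dist (x y : R * R) : R :=
  sqrt ((fst x - fst y) ^ 2 + (snd x - snd y) ^ 2).

Definition dist_adj (A : nat -> Prop) (x y : R * R) : Prop :=
  exists a : nat, A a /\ euclid_dist x y = INR a.

Definition iso_to_subgraph {V W : Type} (adj1 : V -> V -> Prop) (adj2 : W -> W -> Prop) : Prop :=
  exists f : V -> W, (forall u v, f u = f v -> u = v) /\
    (forall u v, adj1 u v -> adj2 (f u) (f v)).

(* Main.v *)
Require Import Defs.
From Stdlib Require Import Reals ZArith List.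
From Stdlib Require Import Lra Lia Psatz.
Import ListNotations.

Open Scope Z_scope.

Lemma in_prod (g : nat -> Z) (l : list nat) (x : nat) :
  In x l -> (g x | fold_right Z.mul 1 (map g l)).
Proof.
  induction l as [|y l IH]; simpl; [tauto|].
  intros [->|H].
  - exists (fold_right Z.mul 1 (map g l)); ring.
  - apply Z.divide_mul_r; auto.
Qed.

Lemma prod_pos (g : nat -> Z) (l : list nat) :
  (forall x, 0 < g x) -> 0 < fold_right Z.mul 1 (map g l).
Proof.
  intros H; induction l as [|y l IH]; simpl; [lia|].
  apply Z.mul_pos_pos; auto.
Qed.

Lemma fac_pos q k j : 1 <= q -> 0 < fac q k j.
Proof.
  intros Hq; unfold fac.
  assert (0 <= q ^ (k + j)) by (apply Z.pow_nonneg; lia).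
  assert (0 <= q ^ (k - j)) by (apply Z.pow_nonneg; lia).
  lia.
Qed.

Lemma X_pos q k : 1 <= q -> 0 < Xqk q k.
Proof. intros Hq; unfold Xqk; apply prod_pos; intros; apply fac_pos; auto. Qed.

Lemma key q k j : 1 <= q -> 1 <= j <= k - 1 ->
  q ^ k * (fst (Dpt q k j) ^ 2 + snd (Dpt q k j) ^ 2) + fst (Dpt q k j) * snd (Dpt q k j)
  = q ^ k * Xqk q k ^ 2.
Proof.
  intros Hq Hj.
  assert (Hd : (fac q k j | Xqk q k)).
  { unfold Xqk.
    replace (fac q k j) with ((fun j0 => fac q k (Z.of_nat j0)) (Z.to_nat j))
      by (simpl; rewrite Z2Nat.id; lia).
    apply (in_prod (fun j0 => fac q k (Z.of_nat j0))). apply in_seq. lia. }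
  assert (Hf := fac_pos q k j Hq).
  assert (HX : Xqk q k = fac q k j * (Xqk q k / fac q k j)).
  { apply Z.div_exact; [lia|]. apply Z.mod_divide; [lia|auto]. }
  unfold Dpt; cbv [fst snd].
  set (c := Xqk q k / fac q k j) in *.
  rewrite HX. unfold fac.
  assert (E1 : q ^ (k + j) = q ^ j * q ^ j * q ^ (k - j)).
  { rewrite <- !Z.pow_add_r by lia. f_equal. lia. }
  assert (E2 : q ^ k = q ^ j * q ^ (k - j)).
  { rewrite <- !Z.pow_add_r by lia. f_equal. lia. }
  rewrite E1, E2. generalize (q ^ j) (q ^ (k - j)); intros; ring.
Qed.

Close Scope Z_scope.
Open Scope R_scope.

Theorem lemma4 (q k : Z) (A : nat -> Prop) :
  (1 <= q)%Z -> (2 <= k)%Z ->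
  iso_to_subgraph (cayley_adj (in_pmAD A q k)) (dist_adj A).
Proof.
  intros Hq Hk.
  set (m := IZR (q ^ k)).
  set (X := IZR (Xqk q k)).
  assert (Hm : 1 <= m).
  { unfold m; apply IZR_le. assert (0 < q ^ k)%Z by (apply Z.pow_pos_nonneg; lia).
    lia. }
  assert (HXp : 1 <= X).
  { unfold X; apply IZR_le. pose proof (X_pos q k Hq). lia. }
  set (S := sqrt (4 * m ^ 2 - 1)).
  assert (HS : S * S = 4 * m ^ 2 - 1) by (apply sqrt_sqrt; nra).
  assert (HSp : 0 < S) by (apply sqrt_lt_R0; nra).
  exists (fun p : Z * Z => ((1 / (2 * m * X)) * (2 * m * IZR (fst p) + IZR (snd p)),
                            (S / (2 * m * X)) * IZR (snd p))).
  split.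
  - intros [ux uy] [vx vy] H. simpl in H. injection H as H1 H2.
    assert (Hy : IZR uy = IZR vy).
    { apply (Rmult_eq_reg_l (S / (2 * m * X))); auto.
      apply Rgt_not_eq. apply Rdiv_lt_0_compat; nra. }
    rewrite Hy in H1.
    assert (Hx : IZR ux = IZR vx).
    { apply Rmult_eq_reg_l in H1.
      - apply Rplus_eq_reg_r in H1. apply (Rmult_eq_reg_l (2 * m)); nra.
      - apply Rgt_not_eq. apply Rdiv_lt_0_compat; nra. }
    apply eq_IZR in Hx, Hy. subst; reflexivity.
  - intros [ux uy] [vx vy] H.
    destruct H as [a [j [s [Ha [Hj [Hs Hw]]]]]].
    assert (Hw1 : (vx - ux = s * Z.of_nat a * fst (Dpt q k j))%Z) by exact (f_equal fst Hw).
    assert (Hw2 : (vy - uy = s * Z.of_nat a * snd (Dpt q k j))%Z) by exact (f_equal snd Hw).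
    exists a; split; auto.
    unfold euclid_dist; cbv beta iota zeta delta [fst snd].
    pose proof (key q k j Hq Hj) as K.
    set (d1 := fst (Dpt q k j)) in *.
    set (d2 := snd (Dpt q k j)) in *.
    rewrite !Z.pow_2_r in K.
    apply (f_equal IZR) in K.
    rewrite plus_IZR, !mult_IZR, plus_IZR, !mult_IZR in K.
    fold m X in K.
    assert (Dx : IZR vx = IZR ux + IZR s * INR a * IZR d1).
    { rewrite INR_IZR_INZ, <- !mult_IZR, <- plus_IZR. f_equal. lia. }
    assert (Dy : IZR vy = IZR uy + IZR s * INR a * IZR d2).
    { rewrite INR_IZR_INZ, <- !mult_IZR, <- plus_IZR. f_equal. lia. }
    assert (Hs2 : IZR s * IZR s = 1) by (destruct Hs; subst; simpl; lra).
    rewrite Dx, Dy.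
    set (ux' := IZR ux) in *. set (uy' := IZR uy) in *.
    set (s' := IZR s) in *. set (a' := INR a).
    set (e1 := IZR d1) in *. set (e2 := IZR d2) in *.
    assert (Hpos : 0 < 2 * m * X) by nra.
    replace ((1 / (2 * m * X) * (2 * m * ux' + uy') -
              1 / (2 * m * X) * (2 * m * (ux' + s' * a' * e1) + (uy' + s' * a' * e2))) ^ 2 +
             (S / (2 * m * X) * uy' - S / (2 * m * X) * (uy' + s' * a' * e2)) ^ 2)
      with (((2 * m * (s' * a' * e1) + s' * a' * e2) ^ 2 + (S * S) * (s' * a' * e2) ^ 2)
              / (2 * m * X) ^ 2) by (field; lra).
    rewrite HS.
    replace ((2 * m * (s' * a' * e1) + s' * a' * e2) ^ 2 + (4 * m ^ 2 - 1) * (s' * a' * e2) ^ 2)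
      with (4 * m * a' ^ 2 * (s' * s') * (m * (e1 ^ 2 + e2 ^ 2) + e1 * e2)) by ring.
    replace (m * (e1 ^ 2 + e2 ^ 2) + e1 * e2) with (m * (e1 * e1 + e2 * e2) + e1 * e2) by ring.
    rewrite K, Hs2.
    replace (4 * m * a' ^ 2 * 1 * (m * (X * X)) / (2 * m * X) ^ 2) with (a' ^ 2) by (field; lra).
    fold a'.
    apply sqrt_pow2. apply pos_INR.
Qed.
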